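(* Let $(\Omega,\mathcal F)$ be a measurable space with $\Sigma\neq\emptyset$, and let $v:\mathcal F\to\mathbb R$ be a non-decreasing and continuous set function with $v(\emptyset)=0$. Then the following are equivalent. (a) $v$ is supermodular: $v(A)+v(B)\le v(A\cup B)+v(A\cap B)$ for all $A,B\in\mathcal F$. (b) For every $\mathcal I\in\Sigma$, $\mu_{v,\mathcal I}\in\mathcal C_{+,v}(\Omega)$, where $\mathcal C_{+,v}(\Omega)=\{\mu\in\mathcal M(\Omega)\mid\mu(\Omega)=v(\Omega),\ \mu(B)\ge v(B)\ \forall B\in\mathcal F\}$. (c) $v(A)=\inf_{\mathcal I\in\Sigma}\mu_{v,\mathcal I}(A)$ for all $A\in\mathcal F$. (d) For all $A,B\in\mathcal F$ with $B\subset A$, $v(B)=\inf_{\mu\in\mathcal C_{+,v}(A)}\mu(B)$, where $\mathcal C_{+,v}(A)=\{\mu\in\mathcal M(A)\mid \mu(A)=v(A),\ \mu(B')\ge v(B')\ \forall B'\in\mathcal F,\ B'\subset A\}$.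
   Context: $\Sigma$ denotes the set of all classes $\mathcal I\subset\mathcal F$ that are chains (totally ordered by inclusion), contain $\emptyset$ and $\Omega$, and generate $\mathcal F$ as a $\sigma$-algebra. $\mathcal M(A)$ is the set of finite measures on $(A,\mathcal F|_A)$. $v$ is non-decreasing if $v(A)\le v(B)$ for $A\subset B$. For $\mathcal I\in\Sigma$ let $\mathcal J$ be the algebra generated by $\mathcal I$, whose elements are the sets $\bigcup_{i=1}^n (C_i\cap D_i^c)$ with $C_1\supset D_1\supset\cdots\supset C_n\supset D_n$ in $\mathcal I$; define $\mu_{v,\mathcal I}(\bigcup_{i=1}^n (C_i\cap D_i^c))=\sum_{i=1}^n(v(C_i)-v(D_i))$. $v$ is continuous if for every $\mathcal I\in\Sigma$ this $\mu_{v,\mathcal I}$ is $\sigma$-additive on $\mathcal J$; it then extends uniquely to a measure on $\mathcal F$, again denoted $\mu_{v,\mathcal I}$ (the extremal measure). *)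

(* Defs.v *)
From HB Require Import structures.
From mathcomp Require Import all_boot all_order all_algebra.
From mathcomp Require Import all_classical all_reals all_analysis.
Set Implicit Arguments. Unset Strict Implicit. Unset Printing Implicit Defensive.
Import Order.TTheory GRing.Theory Num.Theory.
Import numFieldNormedType.Exports.
Local Open Scope classical_set_scope.
Local Open Scope ring_scope.

Section Defs.
Context {d : measure_display} {T : measurableType d} {R : realType}.

Definition inSigma (I : set (set T)) : Prop :=
  I `<=` measurable /\
  (forall C D, I C -> I D -> C `<=` D \/ D `<=` C) /\
  I set0 /\ I setT /\
  <<s I >> = @measurable d T.

Fixpoint desc_chain (l : seq (set T)) : Prop :=
  match l with
  | x :: ((y :: _) as t) => y `<=` x /\ desc_chain t
  | _ => True
  end.

(* s = [(C1,D1);...;(Cn,Dn)] with C1 ⊇ D1 ⊇ ... ⊇ Cn ⊇ Dn in I represents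
   the element A = ⋃ (C_i ∩ D_i^c) of the algebra J generated by I *)
Definition jrep (I : set (set T)) (A : set T) (s : seq (set T * set T)) : Prop :=
  let l := flatten [seq [:: p.1; p.2] | p <- s] in
  (forall X, X \in l -> I X) /\ desc_chain l /\
  A = \big[setU/set0]_(p <- s) (p.1 `&` ~` p.2).

(* mu_{v,I} of the set represented by s *)
Definition jval (v : set T -> R) (s : seq (set T * set T)) : R :=
  \sum_(p <- s) (v p.1 - v p.2).

(* v is continuous: for every I in Sigma, mu_{v,I} is sigma-additive on J *)
Definition continuous_sf (v : set T -> R) : Prop :=
  forall I, inSigma I ->
  forall (A : nat -> set T) (s : nat -> seq (set T * set T)) t,
    (forall k, jrep I (A k) (s k)) -> trivIset setT A ->
    jrep I (\bigcup_k A k) t ->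
    (fun n => \sum_(0 <= k < n) jval v (s k)) @ \oo --> jval v t.

Definition nondecreasing_sf (v : set T -> R) : Prop :=
  forall A B, measurable A -> measurable B -> A `<=` B -> v A <= v B.

Definition supermodular (v : set T -> R) : Prop :=
  forall A B, measurable A -> measurable B ->
    v A + v B <= v (A `|` B) + v (A `&` B).

(* mu is a finite measure on (A, F|_A) (only its values on measurable
   subsets of the measurable set A are relevant) *)
Definition finmeasure_on (A : set T) (mu : set T -> R) : Prop :=
  mu set0 = 0 /\
  (forall B, measurable B -> B `<=` A -> 0 <= mu B) /\
  (forall F : nat -> set T,
     (forall n, measurable (F n) /\ F n `<=` A) -> trivIset setT F ->
     (fun n => \sum_(0 <= i < n) mu (F i)) @ \oo --> mu (\bigcup_n F n)).

(* mu is the extremal measure mu_{v,I}: the (unique) finite measure on F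
   extending mu_{v,I} from the algebra J *)
Definition extremal (v : set T -> R) (I : set (set T)) (mu : set T -> R) : Prop :=
  finmeasure_on setT mu /\ forall A s, jrep I A s -> mu A = jval v s.

Definition Cplus (v : set T -> R) (A : set T) (mu : set T -> R) : Prop :=
  finmeasure_on A mu /\ mu A = v A /\
  (forall B, measurable B -> B `<=` A -> v B <= mu B).

End Defs.

Definition is_inf {R : realType} (S : set R) (x : R) : Prop :=
  (forall y, S y -> x <= y) /\ (forall z, (forall y, S y -> z <= y) -> z <= x).

(* Main.v *)
Require Import Defs.
From HB Require Import structures.
From mathcomp Require Import all_boot all_order all_algebra.
From mathcomp Require Import all_classical all_reals all_analysis.
From Stdlib Require Import ClassicalEpsilon.
From mathcomp Require Import lra.
Import Order.TTheory GRing.Theory Num.Theory.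
Set Implicit Arguments. Unset Strict Implicit. Unset Printing Implicit Defensive.
Local Open Scope classical_set_scope.
Local Open Scope ring_scope.

Section Basic.
Context {d : measure_display} {T : measurableType d} {R : realType}.
Implicit Types (mu : set T -> R) (A X Y : set T).

Lemma fm_add A mu : finmeasure_on A mu -> forall X Y, measurable X -> measurable Y ->
  X `<=` A -> Y `<=` A -> X `&` Y = set0 -> mu (X `|` Y) = mu X + mu Y.
Proof.
move=> [m0 [m_ge0 msig]] X Y mX mY XA YA XY0.
have hF : forall n, measurable (bigcup2 X Y n) /\ bigcup2 X Y n `<=` A.
  by move=> [|[|n]] /=; split.
have tF : trivIset setT (bigcup2 X Y) by rewrite -trivIset_bigcup2.
have := msig _ hF tF; rewrite bigcup2E => h.
have h2 : (fun n => \sum_(0 <= i < n) mu (bigcup2 X Y i)) @ \oo --> mu X + mu Y.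
  apply: cvg_near_cst; near=> n.
  have n2 : (2 <= n)%N by near: n; exists 2%N.
  rewrite (big_cat_nat _ (n:=2)) //= big_nat_recr //= big_nat1 /= big1_seq ?m0 ?addr0 //.
  move=> i /andP[_]; rewrite mem_index_iota => /andP[i2 _].
  by rewrite /bigcup2; case: i i2 => [|[|i]] //= _; rewrite m0.
exact: (cvg_unique _ h h2).
Unshelve. all: by end_near.
Qed.

Lemma fm_diff A mu : finmeasure_on A mu -> forall X Y, measurable X -> measurable Y ->
  X `<=` Y -> Y `<=` A -> mu (Y `\` X) = mu Y - mu X.
Proof.
move=> hm X Y mX mY XY YA.
have mD : measurable (Y `\` X) by exact: measurableD.
have e : mu Y = mu X + mu (Y `\` X).
  rewrite -(fm_add hm) ?setDUK //.
  - exact: subset_trans YA.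
  - by move=> x [/YA].
  - by rewrite setDE setIA (setIC X) -setIA setICr setI0.
by rewrite e addrC addKr.
Qed.

Lemma fm_ge0 A mu : finmeasure_on A mu -> forall X, measurable X -> X `<=` A -> 0 <= mu X.
Proof. by move=> [_ [h _]]. Qed.

Lemma fm_le A mu : finmeasure_on A mu -> forall X Y, measurable X -> measurable Y ->
  X `<=` Y -> Y `<=` A -> mu X <= mu Y.
Proof.
move=> hm X Y mX mY XY YA.
rewrite -subr_ge0 -(fm_diff hm) //; apply: (fm_ge0 hm); first exact: measurableD.
by move=> x [/YA].
Qed.

Lemma fm_unique (I : set (set T)) mu1 mu2 :
  I `<=` measurable -> (forall C D, I C -> I D -> C `<=` D \/ D `<=` C) ->
  I setT -> <<s I >> = @measurable d T ->
  finmeasure_on setT mu1 -> finmeasure_on setT mu2 ->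
  (forall C, I C -> mu1 C = mu2 C) ->
  forall X, measurable X -> mu1 X = mu2 X.
Proof.
move=> Im Ich IT Igen h1 h2 hI.
pose H := [set E : set T | measurable E /\ mu1 E = mu2 E].
have dH : dynkin H.
  split.
  - by split => //; exact: hI.
  - move=> E [mE e]; split; first exact: measurableC.
    rewrite -setTD (fm_diff h1) // (fm_diff h2) //; by [rewrite e hI | apply: Im].
  - move=> F tF HF.
    have mF : forall n, measurable (F n) /\ F n `<=` setT by move=> n; split => //; case: (HF n).
    split; first by apply: bigcupT_measurable => n; case: (HF n).
    have c1 := h1.2.2 F mF tF.
    have c2 := h2.2.2 F mF tF.
    have e : (fun n => \sum_(0 <= i < n) mu1 (F i)) = (fun n => \sum_(0 <= i < n) mu2 (F i)).
      by apply/funext => n; apply: eq_bigr => i _; case: (HF i).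
    rewrite e in c1; exact: (cvg_unique _ c1 c2).
have Iset : setI_closed I.
  move=> A B IA IB; case: (Ich A B IA IB) => AB.
    by rewrite setIidl.
  by rewrite setIidr.
have := lambda_system_subset Iset ((dynkin_lambda_system H).1 dH).
move=> /(_ _ _) sub X mX.
have : H X.
  apply: sub => //.
  - by move=> C IC; split; [apply: Im | apply: hI].
  - by rewrite Igen.
by case.
Qed.
End Basic.

Section Ivl.
Context {T : Type}.
Variable I : set (set T).
Hypothesis Ich : forall C D, I C -> I D -> C `<=` D \/ D `<=` C.

Definition ivl : set (set T) :=
  [set X | exists C D, [/\ I C, I D, D `<=` C & X = C `\` D]].

Lemma setD_sub0 (C D : set T) : C `<=` D -> C `\` D = set0.
Proof. by move=> CD; apply/seteqP; split => x //= [/CD]. Qed.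

Lemma ivl_any C D : I C -> I D -> ivl (C `\` D).
Proof.
move=> IC ID; case: (Ich IC ID) => CD.
  by exists C, C; split => //; rewrite !setD_sub0.
by exists C, D.
Qed.

Lemma Iunion C D : I C -> I D -> I (C `|` D).
Proof. by move=> IC ID; case: (Ich IC ID) => CD; [rewrite setUidr|rewrite setUidl]. Qed.

Lemma Iinter C D : I C -> I D -> I (C `&` D).
Proof. by move=> IC ID; case: (Ich IC ID) => CD; [rewrite setIidl|rewrite setIidr]. Qed.

Lemma ivl_key C1 D1 C1' D1' x : I C1 -> I D1' -> D1' `<=` C1' ->
  C1 `\` D1 = C1' `\` D1' -> (C1 `\` D1) x -> C1 `<=` C1' -> C1' `<=` C1.
Proof.
move=> IC1 ID1' D1C1' e1 x1 C1C1' y C1'y.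
apply: contrapT => nC1y.
case: (Ich ID1' IC1) => [D1'C1|C1D1'].
  have : (C1' `\` D1') y by split => // /D1'C1.
  by rewrite -e1 => -[].
have : (C1' `\` D1') x by rewrite -e1.
by move=> [_]; apply; apply: C1D1'; case: x1.
Qed.

Lemma ivl_uniq C D C' D' : I C -> I D -> I C' -> I D' -> D `<=` C -> D' `<=` C' ->
  C `\` D = C' `\` D' -> (C = D /\ C' = D') \/ (C = C' /\ D = D').
Proof.
move=> IC ID IC' ID' DC DC' e.
have [[x Cx]|nx] := pselect (exists x, (C `\` D) x); last first.
  left; split; apply/seteqP; split => // y.
  - by move=> Cy; apply: contrapT => Dy; apply: nx; exists y.
  - by move=> Cy; apply: contrapT => Dy; apply: nx; exists y; rewrite e.
have CC' : C = C'.
  case: (Ich IC IC') => h; apply/seteqP; split => //.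
  - exact: (ivl_key IC ID' DC' e Cx h).
  - have Cx' : (C' `\` D') x by rewrite -e.
    exact: (ivl_key IC' ID DC (esym e) Cx' h).
subst C'; right; split => //; apply/seteqP; split => y Dy.
- apply: contrapT => nD'y.
  have : (C `\` D') y by split => //; apply: DC.
  by rewrite -e => -[].
- apply: contrapT => nDy.
  have : (C `\` D) y by split => //; apply: DC'.
  by rewrite e => -[].
Qed.

Lemma ivlI : setI_closed ivl.
Proof.
move=> _ _ [C [D [IC ID DC ->]]] [C' [D' [IC' ID' DC' ->]]].
have -> : (C `\` D) `&` (C' `\` D') = (C `&` C') `\` (D `|` D').
  apply/seteqP; split => x /=.
  - by move=> [[Cx Dx] [C'x D'x]]; split => // -[].
  - by move=> [[Cx C'x] nDD]; split; split => // => ?; apply: nDD; [left|right].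
by apply: ivl_any; [apply: Iinter|apply: Iunion].
Qed.

Lemma ivlD : semi_setD_closed ivl.
Proof.
move=> _ _ [C [D [IC ID DC ->]]] [C' [D' [IC' ID' DC' ->]]].
pose X1 := C `\` (D `|` C'); pose X2 := (C `&` D') `\` D.
exists [set X1; X2]; split.
- exact: finite_set2.
- by move=> X [->|->]; apply: ivl_any => //; [apply: Iunion|apply: Iinter].
- rewrite bigcup_setU1 bigcup_set1; apply/seteqP; split => x /=.
  + move=> [[Cx nDx] nC'D'x].
    have [C'x|nC'x] := pselect (C' x).
      by right; split => //; split => //; apply: contrapT => nD'x; apply: nC'D'x.
    by left; split => // -[].
  + move=> [[Cx nx]|[[Cx D'x] nDx]].
      split; first by split => // Dx; apply: nx; left.
      by move=> [C'x _]; apply: nx; right.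
    by split => // -[].
- move=> X Y [->|->] [->|->] //.
  + move=> [x [[_ nx] [[_ D'x] _]]].
    by exfalso; apply: nx; right; apply: DC'.
  + move=> [x [[[_ D'x] _] [_ nx]]].
    by exfalso; apply: nx; right; apply: DC'.
Qed.

End Ivl.

Definition chT {d} (T : measurableType d) (I : set (set T)) : Type := T.

Section Ext.
Context {d : measure_display} {T : measurableType d} {R : realType}.
Variable I : set (set T).
Hypothesis Im : I `<=` measurable.
Hypothesis Ich : forall C D, I C -> I D -> C `<=` D \/ D `<=` C.
Hypothesis I0 : I set0.
Hypothesis IT : I setT.
Hypothesis Igen : <<s I >> = @measurable d T.
Variable f : set T -> R.
Hypothesis fmono : forall C D, I C -> I D -> D `<=` C -> f D <= f C.
Hypothesis fsig : forall (Cs Ds : nat -> set T) C D,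
  (forall k, [/\ I (Cs k), I (Ds k) & Ds k `<=` Cs k]) -> I C -> I D -> D `<=` C ->
  trivIset setT (fun k => Cs k `\` Ds k) ->
  \bigcup_k (Cs k `\` Ds k) = C `\` D ->
  (fun n => \sum_(0 <= k < n) (f (Cs k) - f (Ds k))) @ \oo --> f C - f D.

Let U := chT I.

Let P (X : set T) (p : set T * set T) := [/\ I p.1, I p.2, p.2 `<=` p.1 & X = p.1 `\` p.2].

Definition rep (X : set T) : set T * set T := epsilon (inhabits (set0, set0)) (P X).

Lemma repP X : ivl I X -> P X (rep X).
Proof. by move=> [C [D h]]; apply: (epsilon_spec _ (P X)); exists (C, D). Qed.

Definition lam (X : set U) : \bar R := (Num.max (f (rep X).1 - f (rep X).2) 0)%:E.

Lemma lamE C D : I C -> I D -> D `<=` C -> lam (C `\` D) = (f C - f D)%:E.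
Proof.
move=> IC ID DC; rewrite /lam.
have [] := repP (ivl_any Ich IC ID).
set p := rep _ => Ip1 Ip2 p21 e.
case: (ivl_uniq Ich IC ID Ip1 Ip2 DC p21 e) => [[-> ->]|[<- <-]].
  by rewrite !subrr maxxx.
by rewrite max_l // subr_ge0 fmono.
Qed.

Lemma lam0 : lam set0 = 0.
Proof.
have -> : (set0 : set U) = set0 `\` set0 by rewrite set0D.
by rewrite lamE // subrr.
Qed.

Lemma lam_ge0 X : (0 <= lam X)%E.
Proof. by rewrite /lam lee_fin le_max lexx orbT. Qed.

HB.instance Definition _ := Pointed.on U.
Lemma ivl0 : ivl I set0.
Proof. by exists set0, set0; split => //; rewrite set0D. Qed.

HB.instance Definition _ := @isSemiRingOfSets.Build default_measure_display U
  (ivl I) ivl0 (ivlI Ich) (ivlD Ich).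

Lemma lam_sigma : semi_sigma_additive lam.
Proof.
move=> F mF tF mU.
have rF k := repP (mF k).
pose Cs k := (rep (F k)).1; pose Ds k := (rep (F k)).2.
have eF k : F k = Cs k `\` Ds k by case: (rF k).
have hk k : [/\ I (Cs k), I (Ds k) & Ds k `<=` Cs k] by case: (rF k).
have := repP mU; set p := rep _ => -[IC ID DC eU].
have eFF : F = (fun k => Cs k `\` Ds k) by apply/funext => k; exact: eF.
have h := fsig hk IC ID DC.
rewrite -eFF in h; have {h} := h tF eU => h.
have e1 : (fun n => \sum_(0 <= i < n) lam (F i)) =
          (fun n => (\sum_(0 <= i < n) (f (Cs i) - f (Ds i)))%:E).
  apply/funext => n; rewrite -sumEFin; apply: eq_bigr => i _.
  by rewrite (eF i) lamE //; case: (hk i).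
rewrite e1 eU lamE //.
apply: cvg_EFin; first by near=> n.
exact: h.
Unshelve. all: by end_near.
Qed.

HB.instance Definition _ := isMeasure.Build _ _ _ lam lam0 lam_ge0 lam_sigma.




Let V := g_sigma_algebraType (@measurable _ U).
Let ext := measure_extension lam.

Lemma measV (X : set T) : measurable X -> (@measurable _ V) X.
Proof.
rewrite -Igen => mX; apply: (sub_smallest2r _ _ mX).
  exact: smallest_sigma_algebra.
by move=> C IC; rewrite -(setD0 C); apply: ivl_any.
Qed.

Lemma ivlV C D : I C -> I D -> D `<=` C -> ext (C `\` D) = (f C - f D)%:E.
Proof.
move=> IC ID DC; rewrite /ext /measure_extension measurable_mu_extE.
  exact: lamE.
exact: ivl_any.
Qed.

Lemma ext_fin (X : set T) : measurable X -> ext X \is a fin_num.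
Proof.
move=> mX; rewrite ge0_fin_numE ?measure_ge0 //.
apply: (@le_lt_trans _ _ (ext setT)).
  have mX' : (@measurable _ V) X by exact: measV.
  have mT' : (@measurable _ V) setT by exact: measV.
  exact: (le_measure ext (mem_set mX') (mem_set mT') (@subsetT _ X)).
by rewrite -(setD0 setT) ivlV // ltry.
Qed.

Lemma ext_exists : exists mu : set T -> R, finmeasure_on setT mu /\
  forall C D, I C -> I D -> D `<=` C -> mu (C `\` D) = f C - f D.
Proof.
exists (fun X => fine (ext X)); split; last first.
  by move=> C D IC ID DC; rewrite ivlV.
split; first exact: (congr1 fine (@measure0 _ _ _ ext)).
split; first by move=> B mB _; apply: fine_ge0; exact: measure_ge0.
move=> F hF tF.
have mF n : (@measurable _ V) (F n) by apply: measV; case: (hF n).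
have mU : measurable (\bigcup_n F n) by apply: bigcupT_measurable => n; case: (hF n).
have h := @measure_sigma_additive _ _ _ ext F mF tF.
have h' : (fun n => \sum_(0 <= i < n) ext (F i)) @ \oo --> (fine (ext (\bigcup_n F n)))%:E.
  rewrite (fineK (ext_fin mU)); exact: h.
have := fine_cvg h'.
have -> : (fine \o (fun n => \sum_(0 <= i < n) ext (F i))) =
   (fun n => \sum_(0 <= i < n) fine (ext (F i))).
  apply/funext => n /=.
  rewrite -EFin_sum_fine //; move=> i _; apply: ext_fin; case: (hF i) => //.
by move=> h2; apply: h2.
Qed.

End Ext.

Section Jrep.
Context {d : measure_display} {T : measurableType d} {R : realType}.

Definition fl (s : seq (set T * set T)) := flatten [seq [:: p.1; p.2] | p <- s].
Definition bu (s : seq (set T * set T)) := \big[setU/set0]_(p <- s) (p.1 `&` ~` p.2).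

Lemma fl_cons p s : fl (p :: s) = p.1 :: p.2 :: fl s.
Proof. by []. Qed.

Lemma bu_cons p s : bu (p :: s) = (p.1 `&` ~` p.2) `|` bu s.
Proof. by rewrite /bu big_cons. Qed.

Lemma desc_tail (x : set T) (l : seq (set T)) : desc_chain (x :: l) -> desc_chain l.
Proof. by case: l => // y l [_]. Qed.

Lemma bu_sub s X : desc_chain (X :: fl s) -> bu s `<=` X.
Proof.
elim: s X => [|[C D] s IH] X; first by rewrite /bu big_nil => _; exact: sub0set.
rewrite fl_cons bu_cons => -[CX [DC h]].
rewrite subUset; split; first by move=> x [/CX].
exact: subset_trans (subset_trans (IH D h) DC) CX.
Qed.

Lemma bu_meas s : (forall X, X \in fl s -> measurable X) -> measurable (bu s).
Proof.
elim: s => [|[C D] s IH] h; first by rewrite /bu big_nil.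
rewrite bu_cons; apply: measurableU.
  apply: measurableI; first by apply: h; rewrite fl_cons in_cons eqxx.
  by apply: measurableC; apply: h; rewrite fl_cons !in_cons eqxx orbT.
by apply: IH => X XI; apply: h; rewrite fl_cons !in_cons XI !orbT.
Qed.

Lemma jrep1 (I : set (set T)) C D : I C -> I D -> D `<=` C -> jrep I (C `\` D) [:: (C, D)].
Proof.
move=> IC ID DC; split; last split.
- by move=> X; rewrite /= !in_cons in_nil orbF => /orP[] /eqP ->.
- by [].
- by rewrite big_cons big_nil setU0 setDE.
Qed.

Lemma jval1 (v : set T -> R) C D : jval v [:: (C, D)] = v C - v D.
Proof. by rewrite /jval big_cons big_nil addr0. Qed.

Lemma jrep_val (I : set (set T)) (v : set T -> R) (mu : set T -> R) :
  I `<=` measurable -> finmeasure_on setT mu ->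
  (forall C D, I C -> I D -> D `<=` C -> mu (C `\` D) = v C - v D) ->
  forall s A, jrep I A s -> mu A = jval v s.
Proof.
move=> Im hm hI; elim => [|[C D] s IH] A [h1 [h2 ->]].
  by rewrite big_nil /jval big_nil; case: hm.
have e : \big[setU/set0]_(p <- (C, D) :: s) (p.1 `&` ~` p.2) = bu ((C, D) :: s) by [].
rewrite e bu_cons /jval big_cons /=.
have IC : I C by apply: h1; rewrite /= in_cons eqxx.
have ID : I D by apply: h1; rewrite /= !in_cons eqxx orbT.
have hs : forall X, X \in fl s -> I X.
  by move=> X Xs; apply: h1; rewrite /= !in_cons Xs !orbT.
have [DC hd] : D `<=` C /\ desc_chain (D :: fl s) by case: h2.
have ms : measurable (bu s) by apply: bu_meas => X /hs /Im.
rewrite (fm_add hm) //.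
- rewrite -setDE hI // (IH (bu s)) //; split => //; split => //; exact: desc_tail hd.
- by apply: measurableI; [apply: Im|apply: measurableC; apply: Im].
- apply/seteqP; split => x // [[_ nDx] /(bu_sub hd)] //.
Qed.

End Jrep.

Section Chain.
Context {d : measure_display} {T : measurableType d}.

Definition KB (I : set (set T)) (B : set T) : set (set T) :=
  [set X | exists C, I C /\ (X = C `&` B \/ X = B `|` C)].

Lemma KB_sigma I B : inSigma I -> measurable B -> inSigma (KB I B).
Proof.
move=> [Im [Ich [I0 [IT Igen]]]] mB; split; last split; last split; last split.
- move=> _ [C [IC [->|->]]]; [apply: measurableI|apply: measurableU] => //; exact: Im.
- move=> _ _ [C [IC [->|->]]] [C' [IC' [->|->]]].
  + by case: (Ich C C' IC IC') => h; [left|right]; apply: setSI.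
  + by left => x [_ Bx]; left.
  + by right => x [_ Bx]; left.
  + by case: (Ich C C' IC IC') => h; [left|right]; apply: setUS.
- by exists set0; split => //; left; rewrite set0I.
- by exists setT; split => //; right; rewrite setUT.
- apply/seteqP; split.
    apply: smallest_sub; first exact: sigma_algebra_measurable.
    move=> _ [C [IC [->|->]]]; [apply: measurableI|apply: measurableU] => //; exact: Im.
  rewrite -Igen; apply: smallest_sub; first exact: smallest_sigma_algebra.
  move=> C IC.
  have h : (@measurable _ (g_sigma_algebraType (KB I B))) ((C `&` B) `|` ((B `|` C) `\` B)).
    apply: measurableU; first by apply: sub_sigma_algebra; exists C; split => //; left.
    apply: measurableD; apply: sub_sigma_algebra.
      by exists C; split => //; right.
    by exists setT; split => //; left; rewrite setTI.
  have -> : C = (C `&` B) `|` ((B `|` C) `\` B).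
    apply/seteqP; split => x.
      by move=> Cx; have [Bx|nBx] := pselect (B x); [left|right; split => //; right].
    by move=> [[]|[[]]].
  exact: h.
Qed.

Lemma KB_I I B C : I C -> KB I B (C `&` B).
Proof. by move=> IC; exists C; split => //; left. Qed.

Lemma KB_sup I B A : I A -> B `<=` A -> KB I B A.
Proof. by move=> IA BA; exists A; split => //; right; rewrite setUidr. Qed.

Lemma KB_B I B : I setT -> KB I B B.
Proof. by move=> IT; exists setT; split => //; left; rewrite setTI. Qed.

End Chain.

Section Main.
Context {d : measure_display} {T : measurableType d} {R : realType}.
Variable v : set T -> R.
Hypothesis vmono : nondecreasing_sf v.
Hypothesis vcont : continuous_sf v.
Hypothesis v0 : v set0 = 0.

Lemma extremal_exists I : inSigma I -> exists mu, extremal v I mu.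
Proof.
move=> hI; have [Im [Ich [I0 [IT Igen]]]] := hI.
have fmono : forall C D, I C -> I D -> D `<=` C -> v D <= v C.
  by move=> C D IC ID DC; apply: vmono => //; apply: Im.
have fsig : forall (Cs Ds : nat -> set T) C D,
  (forall k, [/\ I (Cs k), I (Ds k) & Ds k `<=` Cs k]) -> I C -> I D -> D `<=` C ->
  trivIset setT (fun k => Cs k `\` Ds k) ->
  \bigcup_k (Cs k `\` Ds k) = C `\` D ->
  (fun n => \sum_(0 <= k < n) (v (Cs k) - v (Ds k))) @ \oo --> v C - v D.
  move=> Cs Ds C D hk IC ID DC tF eU.
  have := vcont hI (A := fun k => Cs k `\` Ds k) (s := fun k => [:: (Cs k, Ds k)]) (t := [:: (C, D)]).
  rewrite eU jval1; move=> /(_ _ tF (jrep1 IC ID DC)) h.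
  have {}h := h (fun k => let: And3 a b c := hk k in jrep1 a b c).
  have -> : (fun n => \sum_(0 <= k < n) (v (Cs k) - v (Ds k))) =
            (fun n => \sum_(0 <= k < n) jval v [:: (Cs k, Ds k)]).
    by apply/funext => n; apply: eq_bigr => k _; rewrite jval1.
  exact: h.
have [mu [hm hmu]] := ext_exists Ich I0 IT Igen fmono fsig.
exists mu; split => //.
by move=> A s; apply: (jrep_val Im hm hmu).
Qed.


Lemma ext_valI I mu : inSigma I -> extremal v I mu -> forall C, I C -> mu C = v C.
Proof.
move=> [Im [Ich [I0 _]]] [_ hmu] C IC.
have := hmu _ _ (jrep1 IC I0 (@sub0set _ C)).
by rewrite setD0 jval1 v0 subr0.
Qed.

Lemma fm_restrict (A : set T) (mu : set T -> R) : finmeasure_on setT mu -> finmeasure_on A mu.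
Proof.
move=> [h0 [h1 h2]]; split => //; split; first by move=> B mB _; apply: h1.
by move=> F hF; apply: h2 => n; split => //; case: (hF n).
Qed.

Lemma fm_sum (A : set T) (m1 m2 : set T -> R) : finmeasure_on A m1 -> finmeasure_on A m2 ->
  finmeasure_on A (fun X => m1 X + m2 X).
Proof.
move=> [a0 [a1 a2]] [b0 [b1 b2]]; split; first by rewrite a0 b0 addr0.
split; first by move=> B mB BA; rewrite addr_ge0 //; [apply: a1|apply: b1].
move=> F hF tF.
have -> : (fun n => \sum_(0 <= i < n) (m1 (F i) + m2 (F i))) =
  (fun n => \sum_(0 <= i < n) m1 (F i) + \sum_(0 <= i < n) m2 (F i)).
  by apply/funext => n; rewrite big_split.
exact: cvgD (a2 F hF tF) (b2 F hF tF).
Qed.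

Lemma fm_UI (E : set T) (mu : set T -> R) : finmeasure_on E mu -> forall A B,
  measurable A -> measurable B -> A `<=` E -> B `<=` E ->
  mu A + mu B = mu (A `|` B) + mu (A `&` B).
Proof.
move=> hm A B mA mB AE BE.
have mBA : measurable (B `\` A) by exact: measurableD.
have e1 : mu (A `|` B) = mu A + mu (B `\` A).
  have -> : A `|` B = A `|` (B `\` A).
    apply/seteqP; split => x.
      case=> [Ax|Bx]; first by left.
      by have [Ax|nAx] := pselect (A x); [left|right].
    by case=> [Ax|[Bx _]]; [left|right].
  rewrite (fm_add hm) //.
  - by move=> x [/BE].
  - by rewrite setDE setIA (setIC A) -setIA setICr setI0.
have e2 : mu (B `\` A) = mu B - mu (A `&` B).
  have -> : B `\` A = B `\` (A `&` B).
    apply/seteqP; split => x [Bx nx]; split => //.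
      by move=> [].
    by move=> Ax; apply: nx.
  rewrite (fm_diff hm) //; exact: measurableI.
rewrite e1 e2; lra.
Qed.


Lemma a_b : supermodular v -> forall I mu, inSigma I -> extremal v I mu -> Cplus v setT mu.
Proof.
move=> sm I mu hI hext.
have [Im [Ich [I0 [IT Igen]]]] := hI.
have [hm hmu] := hext.
have muI := ext_valI hI hext.
split => //; split; first exact: muI.
move=> B mB _.
pose K := KB I B.
have hK : inSigma K := KB_sigma hI mB.
have [muK hextK] := extremal_exists hK.
have [hmK _] := hextK.
have muKI := ext_valI hK hextK.
pose rho X := muK (X `&` B).
have hrho : finmeasure_on setT rho.
  split; first by rewrite /rho set0I; case: hmK.
  split; first by move=> X mX _; apply: (fm_ge0 hmK) => //; exact: measurableI.
  move=> F hF tF; rewrite /rho setI_bigcupl.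
  apply: hmK.2.2; last exact: trivIset_setIr.
  by move=> n; split => //; apply: measurableI => //; case: (hF n).
pose f X := mu X - rho X.
have fmono : forall C D, I C -> I D -> D `<=` C -> f D <= f C.
  move=> C D IC ID DC; rewrite /f /rho !muI // !muKI; try exact: KB_I.
  have := sm _ _ (measurableI _ _ (Im _ IC) mB) (Im _ ID).
  have h1 : v ((C `&` B) `|` D) <= v C.
    apply: vmono; [apply: measurableU; [apply: measurableI|]|exact: Im|] => //; try exact: Im.
    by move=> x [[]|/DC].
  have -> : (C `&` B) `&` D = D `&` B.
    by apply/seteqP; split => x; [move=> [[]]|move=> [/[dup] /DC]].
  lra.
have fsig : forall (Cs Ds : nat -> set T) C D,
  (forall k, [/\ I (Cs k), I (Ds k) & Ds k `<=` Cs k]) -> I C -> I D -> D `<=` C ->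
  trivIset setT (fun k => Cs k `\` Ds k) ->
  \bigcup_k (Cs k `\` Ds k) = C `\` D ->
  (fun n => \sum_(0 <= k < n) (f (Cs k) - f (Ds k))) @ \oo --> f C - f D.
  move=> Cs Ds C D hk IC ID DC tF eU.
  have ef : forall C D, I C -> I D -> D `<=` C -> f C - f D = mu (C `\` D) - rho (C `\` D).
    move=> C1 D1 IC1 ID1 DC1; rewrite (fm_diff hm) ?(fm_diff hrho) //; try exact: Im.
    rewrite /f; lra.
  have hF : forall n, measurable (Cs n `\` Ds n) /\ (Cs n `\` Ds n) `<=` setT.
    by move=> n; case: (hk n) => a b c; split => //; apply: measurableD; apply: Im.
  have h := cvgB (hm.2.2 _ hF tF) (hrho.2.2 _ hF tF).
  rewrite eU -ef // in h.
  have -> : (fun n => \sum_(0 <= k < n) (f (Cs k) - f (Ds k))) =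
     (fun n => \sum_(0 <= i < n) mu (Cs i `\` Ds i) - \sum_(0 <= i < n) rho (Cs i `\` Ds i)).
    apply/funext => n; rewrite -sumrB; apply: eq_bigr => k _.
    by case: (hk k) => a b c; rewrite ef.
  exact: h.
have [nu [hnu hnuI]] := ext_exists Ich I0 IT Igen fmono fsig.
have key := fm_unique Im Ich IT Igen hm (fm_sum hnu hrho).
rewrite key //; last first.
  move=> C IC; rewrite -(setD0 C) hnuI // /f.
  have -> : rho set0 = 0 by case: hrho.
  have -> : mu set0 = 0 by case: hm.
  rewrite !setD0; lra.
have -> : rho B = v B.
  rewrite /rho setIid muKI //.
  by rewrite -(setTI B); apply: KB_I.
have : 0 <= nu B by apply: (fm_ge0 hnu).
lra.
Qed.


Hypothesis HI0 : exists I : set (set T), inSigma I.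

Lemma b_c : (forall I mu, inSigma I -> extremal v I mu -> Cplus v setT mu) ->
  forall A, measurable A ->
   is_inf [set x | exists I mu, inSigma I /\ extremal v I mu /\ x = mu A] (v A).
Proof.
move=> hb A mA; split.
  move=> _ [I [mu [hI [hext ->]]]]; have [_ [_ h]] := hb I mu hI hext; exact: h.
move=> z hz.
have [I0 hI0] := HI0.
have hK := KB_sigma hI0 mA.
have [mu hext] := extremal_exists hK.
have <- : mu A = v A.
  apply: (ext_valI hK hext); apply: KB_B.
  by case: hI0 => [_ [_ [_ [IT _]]]].
by apply: hz; exists (KB I0 A), mu.
Qed.

Lemma c_d : (forall A, measurable A ->
   is_inf [set x | exists I mu, inSigma I /\ extremal v I mu /\ x = mu A] (v A)) ->
  forall A B, measurable A -> measurable B -> B `<=` A ->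
         is_inf [set x | exists mu, Cplus v A mu /\ x = mu B] (v B).
Proof.
move=> hc.
have hb : forall I mu, inSigma I -> extremal v I mu -> forall B, measurable B -> v B <= mu B.
  by move=> I mu hI hext B mB; apply: (hc B mB).1; exists I, mu.
move=> A B mA mB BA; split.
  by move=> _ [mu [[_ [_ h]] ->]]; exact: h.
move=> z hz.
have [I0 hI0] := HI0.
have hK1 := KB_sigma hI0 mA.
have hK2 := KB_sigma hK1 mB.
have [mu hext] := extremal_exists hK2.
have K1A : KB I0 A A.
  apply: KB_B.
  by case: hI0 => [_ [_ [_ [IT _]]]].
have <- : mu B = v B.
  apply: (ext_valI hK2 hext); apply: KB_B.
  by case: hK1 => [_ [_ [_ [IT _]]]].
apply: hz; exists mu; split => //; split; first exact: fm_restrict hext.1.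
split; first by apply: (ext_valI hK2 hext); exact: KB_sup.
by move=> B' mB' _; exact: hb hK2 hext B' mB'.
Qed.

Lemma d_a : (forall A B, measurable A -> measurable B -> B `<=` A ->
         is_inf [set x | exists mu, Cplus v A mu /\ x = mu B] (v B)) ->
  supermodular v.
Proof.
move=> hd A B mA mB.
have [_ h] := hd (A `|` B) (A `&` B) (measurableU _ _ mA mB) (measurableI _ _ mA mB)
  (fun x (hx : (A `&` B) x) => or_introl hx.1).
have := h (v A + v B - v (A `|` B)).
have AU : A `<=` A `|` B by move=> x; left.
have BU : B `<=` A `|` B by move=> x; right.
have {h} h : (forall y, [set x | exists mu, Cplus v (A `|` B) mu /\ x = mu (A `&` B)] y ->
    v A + v B - v (A `|` B) <= y).
  move=> _ [mu [[hm [hA hle]] ->]].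
  have := fm_UI hm mA mB AU BU.
  have := hle A mA AU; have := hle B mB BU.
  lra.
move=> /(_ h); lra.
Qed.

End Main.

Unset Implicit Arguments.
Set Strict Implicit.

Theorem corollary8 (d : measure_display) (T : measurableType d) (R : realType)
  (v : set T -> R) :
  (exists I : set (set T), inSigma I) ->
  nondecreasing_sf v -> continuous_sf v -> v set0 = 0 ->
  [<-> supermodular v;
       forall I mu, inSigma I -> extremal v I mu -> Cplus v setT mu;
       forall A, measurable A ->
         is_inf [set x | exists I mu, inSigma I /\ extremal v I mu /\ x = mu A] (v A);
       forall A B, measurable A -> measurable B -> B `<=` A ->
         is_inf [set x | exists mu, Cplus v A mu /\ x = mu B] (v B)].
Proof.
move=> HI0 vmono vcont v0.
tfae.
- exact: a_b.
- exact: b_c.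
- exact: c_d.
- exact: d_a.
Qed.
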